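(* Let $(r(k))_{k\ge 0}$ be arbitrary elements of a commutative ring, and define numbers $b(n,k)$ for integers $n\ge 0$, $k\ge -1$ by $b(0,k)=[k=0]$, $b(n,-1)=0$, and for $n>0$, $k\ge 0$, $$b(n,k)=b(n-1,k-1)+r(k)\,b(n-1,k+1).$$ Then for all integers $n,\ell\ge 0$, $$\sum_{k=0}^{\min(n,\ell)} b(2n,2k)\,b(2\ell,2k)\prod_{j=0}^{2k-1} r(j)=b(2n+2\ell,0).$$
   Context: $[P]$ denotes the Iverson bracket (1 if $P$ is true, 0 otherwise). An empty product equals $1$. *)

(* Defs.v *)
From mathcomp Require Import all_boot all_algebra.
Set Implicit Arguments. Unset Strict Implicit. Unset Printing Implicit Defensive.
Import GRing.Theory.
Local Open Scope ring_scope.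

(* b r n k for k >= 0; the value b(n,-1) = 0 is built in: the term
   b(n-1,k-1) is read as 0 when k = 0. *)
Fixpoint bnum (R : comRingType) (r : nat -> R) (n k : nat) : R :=
  match n with
  | 0%N => (k == 0%N)%:R
  | n'.+1 => (match k with 0%N => 0 | k'.+1 => bnum r n' k' end)
             + r k * bnum r n' k.+1
  end.

(* Main.v *)
Require Import Defs.
From mathcomp Require Import all_boot all_algebra.
Import GRing.Theory.
From mathcomp Require Import zify ring.
Local Open Scope ring_scope.

Section S.
Variables (R : comRingType) (r : nat -> R).
Let W k := \prod_(0 <= j < k) r j.

Lemma WS k : W k.+1 = W k * r k.
Proof. by rewrite /W big_nat_recr. Qed.

Lemma bnum_gt m k : (m < k)%N -> bnum r m k = 0.
Proof.
elim: m k => [|m IH] [|k] //= H.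
rewrite (IH k) // (IH k.+2) ?mulr0 ?addr0 //. lia.
Qed.

Lemma bnum_odd m k : odd (m + k) -> bnum r m k = 0.
Proof.
elim: m k => [|m IH] [|k] //= H.
- rewrite IH ?mulr0 ?addr0 //; move: H; rewrite addn0 addn1 /=; by case: (odd m).
- move: H; rewrite addnS /= negbK => H.
  by rewrite !IH ?mulr0 ?addr0 // !addnS /= negbK.
Qed.

Definition T N m p := \sum_(0 <= k < N) bnum r m k * bnum r p k * W k.
Definition A N m p := \sum_(0 <= k < N) bnum r m k * r k * bnum r p k.+1 * W k.

Lemma TC N m p : T N m p = T N p m.
Proof. by apply: eq_bigr => k _; rewrite (mulrC (bnum r m k)). Qed.

Lemma T_step N m p : (m < N)%N -> T N.+1 m.+1 p = A N.+1 m p + A N.+1 p m.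
Proof.
move=> HN.
have E1 : \sum_(0 <= i < N) bnum r m i * bnum r p i.+1 * W i.+1 = A N.+1 m p.
  rewrite /A big_nat_recr //= [bnum r m N]bnum_gt //.
  rewrite !mul0r addr0; apply: eq_bigr => i _.
  by rewrite WS; ring.
have E2 : r 0 * bnum r m 1 * bnum r p 0 * W 0 +
  \sum_(0 <= i < N) r i.+1 * bnum r m i.+2 * bnum r p i.+1 * W i.+1 = A N.+1 p m.
  rewrite /A big_nat_recl //=; congr (_ + _).
    by ring.
  apply: eq_bigr => i _; ring.
rewrite /T big_nat_recl //= add0r.
under eq_bigr => i _ do rewrite /= mulrDl mulrDl.
by rewrite big_split /= -E1 -E2 addrCA addrA.
Qed.

Lemma T_shift N m p : (m < N)%N -> (p < N)%N -> T N.+1 m.+1 p = T N.+1 m p.+1.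
Proof.
by move=> Hm Hp; rewrite T_step // TC T_step // addrC.
Qed.

Lemma T0 N q : T N.+1 0 q = bnum r q 0.
Proof.
rewrite /T big_nat_recl //= big1 ?addr0 /W ?big_geq ?mulr1 ?mul1r //.
by move=> i _; rewrite !mul0r.
Qed.

Lemma T_full N m p : (m + p <= N)%N -> T N.+1 m p = bnum r (m + p) 0.
Proof.
elim: m p => [|m IH] p H; first by rewrite T0.
rewrite T_shift; [|lia|lia]. rewrite IH; [by rewrite addnS | lia].
Qed.

End S.

Lemma sum_even (R : comRingType) (F : nat -> R) M :
  \sum_(0 <= k < 2 * M) F k = \sum_(0 <= k < M) (F (2 * k)%N + F (2 * k).+1).
Proof.
elim: M => [|M IH]; first by rewrite !big_geq.
have -> : (2 * M.+1 = (2 * M).+2)%N by lia.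
by rewrite big_nat_recr // big_nat_recr //= IH big_nat_recr //= addrA.
Qed.

Theorem lemma1 (R : comRingType) (r : nat -> R) (n l : nat) :
  \sum_(0 <= k < (minn n l).+1)
     bnum r (2 * n) (2 * k) * bnum r (2 * l) (2 * k) * \prod_(0 <= j < 2 * k) r j
  = bnum r (2 * n + 2 * l) 0.
Proof.
rewrite -(@T_full R r (2 * n + 2 * l).+1 (2 * n) (2 * l)); last by lia.
have -> : ((2 * n + 2 * l).+2 = 2 * (n + l).+1)%N by lia.
rewrite /T sum_even; symmetry.
rewrite (big_cat_nat _ (n := (minn n l).+1)) /=; last 2 first.
- by [].
- lia.
rewrite [X in _ + X]big1_seq ?addr0; last first.
  move=> k /andP [_]; rewrite mem_index_iota => /andP [Hk _].
  rewrite [bnum r (2 * n) (2 * k).+1]bnum_odd ?mul0r ?add0r; last first.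
    by rewrite addnS /= oddD !oddM.
  case: (ltnP n k) => Hn.
  - by rewrite [bnum r (2 * n) _]bnum_gt ?mul0r ?add0r //; lia.
  - rewrite [bnum r (2 * l) _]bnum_gt ?mulr0 ?mul0r ?add0r //. move: Hk; rewrite ltnNge leq_min Hn /= -ltnNge => Hl; lia.
apply: eq_bigr => k _.
rewrite [bnum r (2 * n) (2 * k).+1]bnum_odd ?mul0r ?addr0 //.
by rewrite addnS /= oddD !oddM.
Qed.
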